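(* Let $\gamma=(\gamma_1,\gamma_2,\gamma_3):[a,b]\to E(1,1)$ be a Euclidean $C^2$-smooth regular curve and $t\in[a,b]$. Set $B=-e^{-\gamma_3}\dot\gamma_1+e^{\gamma_3}\dot\gamma_2$, $B'=\ddot\gamma_2e^{\gamma_3}+\dot\gamma_2\dot\gamma_3e^{\gamma_3}-\ddot\gamma_1e^{-\gamma_3}+\dot\gamma_1\dot\gamma_3e^{-\gamma_3}$, $S=\frac12B^2+\dot\gamma_3^2$, and $\omega(\dot\gamma(t))=-\frac{\sqrt2}{2}(e^{-\gamma_3}\dot\gamma_1+e^{\gamma_3}\dot\gamma_2)$. (i) If $\omega(\dot\gamma(t))\ne0$, then $k^\infty_\gamma=\lim_{L\to+\infty}k^L_\gamma$ exists and equals $\dfrac{\sqrt{\frac12B^2+\dot\gamma_3^2}}{|\omega(\dot\gamma(t))|}$. (ii) If $\omega(\dot\gamma(t))=0$ and $\frac{d}{dt}\omega(\dot\gamma(t))=0$, then the limit exists and $$k^\infty_\gamma=\left\{\frac{\ddot\gamma_3^2+\frac12 (B')^2}{S^2}-\frac{\big(\dot\gamma_3\ddot\gamma_3+\frac12BB'\big)^2}{S^3}\right\}^{1/2}.$$ (iii) If $\omega(\dot\gamma(t))=0$ and $\frac{d}{dt}\omega(\dot\gamma(t))\ne0$, then $\displaystyle\lim_{L\to+\infty}\frac{k^L_\gamma}{\sqrt L}=\frac{|\frac{d}{dt}\omega(\dot\gamma(t))|}{\frac12B^2+\dot\gamma_3^2}$.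
   Context: $E(1,1)$ (the group of rigid motions of the Minkowski plane) is modelled on $\mathbb R^3$ with coordinates $(x_1,x_2,x_3)$ and vector fields $X_1=\partial_{x_3}$, $X_2=\frac{1}{\sqrt2}(-e^{x_3}\partial_{x_1}+e^{-x_3}\partial_{x_2})$, $X_3=-\frac1{\sqrt2}(e^{x_3}\partial_{x_1}+e^{-x_3}\partial_{x_2})$, dual forms $\omega_1=dx_3$, $\omega_2=\frac1{\sqrt2}(-e^{-x_3}dx_1+e^{x_3}dx_2)$, $\omega=-\frac1{\sqrt2}(e^{-x_3}dx_1+e^{x_3}dx_2)$. For $L>0$, $g_L=\omega_1\otimes\omega_1+\omega_2\otimes\omega_2+L\,\omega\otimes\omega$ with Levi-Civita connection $\nabla^L$. Regular means $\dot\gamma\ne0$ everywhere. The curvature of $\gamma$ is $k^L_\gamma=\sqrt{\|\nabla^L_{\dot\gamma}\dot\gamma\|_L^2/\|\dot\gamma\|_L^4-\langle\nabla^L_{\dot\gamma}\dot\gamma,\dot\gamma\rangle_L^2/\|\dot\gamma\|_L^6}$ and $k^\infty_\gamma:=\lim_{L\to+\infty}k^L_\gamma$ when it exists. *)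

(* Defs.v *)
From Stdlib Require Import Reals Lra.
From Coquelicot Require Import Coquelicot.
Open Scope R_scope.

(* Points and tangent vectors of R^3 = E(1,1): coordinates indexed by
   0,1,2 (standing for x_1,x_2,x_3). *)
Definition vec := nat -> R.
Definition sum3 (f : nat -> R) : R := f 0%nat + f 1%nat + f 2%nat.

(* Left-invariant frame: X 0 = X_1, X 1 = X_2, X 2 = X_3 (coordinate components). *)
Definition X (k : nat) (x : vec) : vec :=
  match k with
  | 0%nat => fun i => match i with 2%nat => 1 | _ => 0 end
  | 1%nat => fun i => match i with
                      | 0%nat => - exp (x 2%nat) / sqrt 2
                      | 1%nat => exp (- x 2%nat) / sqrt 2
                      | _ => 0 end
  | _ => fun i => match i with
                  | 0%nat => - (exp (x 2%nat) / sqrt 2)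
                  | 1%nat => - (exp (- x 2%nat) / sqrt 2)
                  | _ => 0 end
  end.

(* Dual coframe: om 0 = omega_1, om 1 = omega_2, om 2 = omega. *)
Definition om (k : nat) (x : vec) (v : vec) : R :=
  match k with
  | 0%nat => v 2%nat
  | 1%nat => / sqrt 2 * (- exp (- x 2%nat) * v 0%nat + exp (x 2%nat) * v 1%nat)
  | _ => - / sqrt 2 * (exp (- x 2%nat) * v 0%nat + exp (x 2%nat) * v 1%nat)
  end.

Definition lam (L : R) (k : nat) : R := match k with 2%nat => L | _ => 1 end.

Definition gL (L : R) (x : vec) (u v : vec) : R :=
  sum3 (fun k => lam L k * om k x u * om k x v).

Definition dirD (Y : vec -> vec) (x v : vec) : vec :=
  fun i => Derive (fun s => Y (fun j => x j + s * v j) i) 0.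
Definition dirDs (f : vec -> R) (x v : vec) : R :=
  Derive (fun s => f (fun j => x j + s * v j)) 0.

Definition br (Y Z : vec -> vec) (x : vec) : vec :=
  fun i => dirD Z x (Y x) i - dirD Y x (Z x) i.

(* Koszul formula: g_L(nabla^L_{X_i} X_j, X_k) at x. *)
Definition koszul (L : R) (x : vec) (i j k : nat) : R :=
  / 2 * ( dirDs (fun y => gL L y (X j y) (X k y)) x (X i x)
        + dirDs (fun y => gL L y (X i y) (X k y)) x (X j x)
        - dirDs (fun y => gL L y (X i y) (X j y)) x (X k x)
        + gL L x (br (X i) (X j) x) (X k x)
        - gL L x (br (X i) (X k) x) (X j x)
        - gL L x (br (X j) (X k) x) (X i x)).

(* Christoffel symbols in the (g_L-orthogonal) frame:
   nabla^L_{X_i} X_j = sum_k Gam L x i j k X_k *)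
Definition Gam (L : R) (x : vec) (i j k : nat) : R :=
  koszul L x i j k / gL L x (X k x) (X k x).

Definition pt (gamma : nat -> R -> R) (t : R) : vec := fun i => gamma i t.
Definition vel (gamma : nat -> R -> R) (t : R) : vec := fun i => Derive (gamma i) t.

Definition hcomp (gamma : nat -> R -> R) (k : nat) (t : R) : R :=
  om k (pt gamma t) (vel gamma t).

Definition acc_comp (L : R) (gamma : nat -> R -> R) (t : R) (k : nat) : R :=
  Derive (hcomp gamma k) t
  + sum3 (fun i => sum3 (fun j =>
      hcomp gamma i t * hcomp gamma j t * Gam L (pt gamma t) i j k)).

Definition acc (L : R) (gamma : nat -> R -> R) (t : R) : vec :=
  fun i => sum3 (fun k => acc_comp L gamma t k * X k (pt gamma t) i).

Definition kappa (L : R) (gamma : nat -> R -> R) (t : R) : R :=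
  let x := pt gamma t in
  let v := vel gamma t in
  let A := acc L gamma t in
  let n := gL L x v v in
  sqrt (gL L x A A / n ^ 2 - (gL L x A v) ^ 2 / n ^ 3).

Definition C2 (f : R -> R) : Prop :=
  (forall s, ex_derive f s) /\ (forall s, ex_derive (Derive f) s) /\
  (forall s, continuous (Derive (Derive f)) s).

(* Main.v *)
Require Import Defs.
From Stdlib Require Import Reals Lra Lia FunctionalExtensionality.
From Coquelicot Require Import Coquelicot.
Open Scope R_scope.

Lemma Hs2 : sqrt 2 * sqrt 2 = 2.
Proof. apply sqrt_sqrt; lra. Qed.
Lemma Hs0 : sqrt 2 <> 0.
Proof. apply Rgt_not_eq, sqrt_lt_R0; lra. Qed.
Lemma expN (y : R) : exp (- y) = / exp y.
Proof. apply exp_Ropp. Qed.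
Lemma expnz (y : R) : exp y <> 0.
Proof. apply Rgt_not_eq, exp_pos. Qed.

Definition D (k : nat) (x : vec) : vec :=
  match k with 0%nat => fun _ => 0 | 1%nat => X 2 x | _ => X 1 x end.

Lemma dirD_X k x v i : dirD (X k) x v i = v 2%nat * D k x i.
Proof.
  unfold dirD.
  destruct k as [|[|k]]; destruct i as [|[|[|i]]]; simpl;
  try (rewrite Derive_const; ring).
  all: apply is_derive_unique; auto_derive; auto.
  all: rewrite Rmult_0_l, ?Rplus_0_r, ?exp_Ropp; pose proof Hs0; pose proof (expnz (x 2%nat)).
  all: field; auto.
Qed.

Lemma br_val i j x : br (X i) (X j) x =
  fun i' => X i x 2%nat * D j x i' - X j x 2%nat * D i x i'.
Proof.
  apply functional_extensionality; intro i'. unfold br.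
  rewrite !dirD_X. ring.
Qed.

Lemma gLX L y j k : (j < 3)%nat -> (k < 3)%nat ->
  gL L y (X j y) (X k y) = if Nat.eqb j k then lam L k else 0.
Proof.
  intros Hj Hk. pose proof Hs2; pose proof Hs0; pose proof (expnz (y 2%nat)).
  destruct j as [|[|[|j]]]; try lia; destruct k as [|[|[|k]]]; try lia;
  unfold gL, sum3, om, lam, X; simpl; rewrite ?expN; field [H]; auto.
Qed.

Lemma dirDs_gLX L x v j k : (j < 3)%nat -> (k < 3)%nat ->
  dirDs (fun y => gL L y (X j y) (X k y)) x v = 0.
Proof.
  intros Hj Hk. unfold dirDs.
  rewrite (Derive_ext _ (fun _ => if Nat.eqb j k then lam L k else 0)).
  - apply Derive_const.
  - intro s. apply gLX; auto.
Qed.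

Definition c (i j k : nat) : R :=
  match i, j, k with
  | O, S O, S (S O) => 1 | S O, O, S (S O) => -1
  | O, S (S O), S O => 1 | S (S O), O, S O => -1 | _, _, _ => 0
  end.

Definition Gv (L : R) (i j k : nat) : R :=
  (lam L k * c i j k - lam L j * c i k j - lam L i * c j k i) / (2 * lam L k).

Lemma Gam_val L x i j k : 0 < L -> (i < 3)%nat -> (j < 3)%nat -> (k < 3)%nat ->
  Gam L x i j k = Gv L i j k.
Proof.
  intros HL Hi Hj Hk. unfold Gam, koszul.
  rewrite !dirDs_gLX by auto. rewrite gLX by auto. rewrite Nat.eqb_refl.
  rewrite !br_val.
  pose proof Hs2; pose proof Hs0; pose proof (expnz (x 2%nat)).
  destruct i as [|[|[|i]]]; try lia; destruct j as [|[|[|j]]]; try lia;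
  destruct k as [|[|[|k]]]; try lia;
  unfold Gv, c, gL, sum3, om, lam, X, D; simpl; rewrite ?expN; field [H]; lra.
Qed.

Lemma om_comb m x a0 a1 a2 : (m < 3)%nat ->
  om m x (fun i => a0 * X 0 x i + a1 * X 1 x i + a2 * X 2 x i) =
  match m with O => a0 | S O => a1 | _ => a2 end.
Proof.
  intros Hm. pose proof Hs2; pose proof Hs0; pose proof (expnz (x 2%nat)).
  destruct m as [|[|[|m]]]; try lia; unfold om, X; simpl; rewrite ?expN; field [H]; auto.
Qed.

Lemma om_acc L gamma t m : (m < 3)%nat ->
  om m (pt gamma t) (acc L gamma t) = acc_comp L gamma t m.
Proof.
  intros Hm. unfold acc, sum3. rewrite om_comb by auto.
  destruct m as [|[|[|m]]]; try lia; reflexivity.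
Qed.

Section K.
Variables (L : R) (gamma : nat -> R -> R) (t : R).
Let h k := hcomp gamma k t.
Let p k := Derive (hcomp gamma k) t.

Lemma acc0 : 0 < L -> acc_comp L gamma t 0 = p 0%nat + (L+1) * h 1%nat * h 2%nat.
Proof. intros HL. unfold acc_comp, sum3. rewrite !Gam_val by (auto; lia).
  unfold Gv, c, lam, h, p; simpl. pose proof Hs0. field; repeat split; auto; lra. Qed.
Lemma acc1 : 0 < L -> acc_comp L gamma t 1 = p 1%nat - L * h 0%nat * h 2%nat.
Proof. intros HL. unfold acc_comp, sum3. rewrite !Gam_val by (auto; lia).
  unfold Gv, c, lam, h, p; simpl. pose proof Hs0. field; repeat split; auto; lra. Qed.
Lemma acc2 : 0 < L -> acc_comp L gamma t 2 = p 2%nat - h 0%nat * h 1%nat / L.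
Proof. intros HL. unfold acc_comp, sum3. rewrite !Gam_val by (auto; lia).
  unfold Gv, c, lam, h, p; simpl. pose proof Hs0. field; repeat split; auto; lra. Qed.
End K.

Definition Kexpr (L h0 h1 h2 p0 p1 p2 : R) : R :=
  let a0 := p0 + (L+1)*h1*h2 in let a1 := p1 - L*h0*h2 in
  let a2 := p2 - h0*h1/L in let n := h0^2+h1^2+L*h2^2 in
  (a0^2+a1^2+L*a2^2)/n^2 - (a0*h0+a1*h1+L*a2*h2)^2/n^3.

Lemma kappa_form L gamma t : 0 < L ->
  kappa L gamma t = sqrt (Kexpr L (hcomp gamma 0 t) (hcomp gamma 1 t) (hcomp gamma 2 t)
     (Derive (hcomp gamma 0) t) (Derive (hcomp gamma 1) t) (Derive (hcomp gamma 2) t)).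
Proof.
  intros HL. unfold kappa, Kexpr. cbv zeta.
  assert (E: forall u w, gL L (pt gamma t) u w =
     om 0 (pt gamma t) u * om 0 (pt gamma t) w + om 1 (pt gamma t) u * om 1 (pt gamma t) w
     + L * (om 2 (pt gamma t) u * om 2 (pt gamma t) w)).
  { intros u w. unfold gL, sum3, lam. ring. }
  rewrite !E, !om_acc by lia.
  rewrite (acc0 L gamma t HL), (acc1 L gamma t HL), (acc2 L gamma t HL).
  unfold hcomp. f_equal. f_equal; [f_equal; [ring|ring] | f_equal; [f_equal; ring | ring]].
Qed.

Lemma lim_inv (f G : R -> R) : (forall L, 0 < L -> f L = G (/L)) ->
  continuous G 0 -> is_lim f p_infty (G 0).
Proof.
  intros Hf HG. unfold is_lim.
  apply filterlim_ext_loc with (fun L => G (/ L)).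
  - exists 0. intros L HL. symmetry. apply Hf; lra.
  - eapply filterlim_comp; [|exact HG].
    pose proof (is_lim_inv (fun x => x) p_infty p_infty (is_lim_id p_infty)) as H.
    simpl in H. apply H. discriminate.
Qed.

Lemma core (h0 h1 h2 p0 p1 p2 : R) (f : R -> R)
  (Hf : forall L, 0 < L -> f L = sqrt (Kexpr L h0 h1 h2 p0 p1 p2)) :
  (h2 <> 0 -> is_lim f p_infty (sqrt (h0^2+h1^2) / Rabs h2)) /\
  (h2 = 0 -> 0 < h0^2+h1^2 -> p2 = 0 ->
     is_lim f p_infty (sqrt ((p0^2+p1^2)/(h0^2+h1^2)^2
        - (h0*p0+h1*p1)^2/(h0^2+h1^2)^3))) /\
  (h2 = 0 -> 0 < h0^2+h1^2 -> p2 <> 0 ->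
     is_lim (fun L => f L / sqrt L) p_infty (Rabs p2 / (h0^2+h1^2))).
Proof.
  split; [|split].
  - intros H2.
    set (F := fun u => ((p0*u + (1+u)*h1*h2)^2 + (p1*u - h0*h2)^2 + u*(p2 - h0*h1*u)^2)
          /(h0^2*u+h1^2*u+h2^2)^2
          - u*((p0*u+(1+u)*h1*h2)*h0 + (p1*u - h0*h2)*h1 + (p2 - h0*h1*u)*h2)^2
          /(h0^2*u+h1^2*u+h2^2)^3).
    replace (sqrt (h0^2+h1^2) / Rabs h2) with (sqrt (F 0)).
    + apply (lim_inv f (fun u => sqrt (F u))).
      * intros L HL. rewrite Hf by auto. f_equal. unfold F, Kexpr.
        assert (0 < h2^2) by (apply pow2_gt_0; auto).
        assert (0 <= h0^2) by apply pow2_ge_0.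
        assert (0 <= h1^2) by apply pow2_ge_0.
        assert (0 < /L) by (apply Rinv_0_lt_compat; auto).
        assert (0 < h0^2 * /L + h1^2 * /L + h2^2).
        { assert (0 <= h0^2 * /L) by (apply Rmult_le_pos; lra).
          assert (0 <= h1^2 * /L) by (apply Rmult_le_pos; lra). lra. }
        assert (0 < h0^2 + h1^2 + L * h2^2).
        { assert (0 < L * h2^2) by (apply Rmult_lt_0_compat; lra). lra. }
        field. repeat split; lra.
      * apply continuous_sqrt_comp. apply (ex_derive_continuous (K := R_AbsRing) (V := R_NormedModule)). unfold F.
        auto_derive. rewrite !Rmult_0_r, !Rplus_0_l.
        repeat split; repeat apply Rmult_integral_contrapositive_currified; try lra; auto.
    + assert (0 < h2^2) by (apply pow2_gt_0; auto).
      replace (F 0) with ((h0^2+h1^2) / (h2^2)) by (unfold F; field; lra).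
      rewrite sqrt_div_alt by auto.
      rewrite <- sqrt_Rsqr_abs. unfold Rsqr. f_equal. f_equal. ring.
  - intros H2 HS Hp2. subst h2 p2.
    set (S := h0^2+h1^2) in *.
    set (F := fun u => (p0^2+p1^2 + h0^2*h1^2*u)/S^2 - (p0*h0+p1*h1)^2/S^3).
    replace ((p0^2+p1^2)/S^2 - (h0*p0+h1*p1)^2/S^3) with (F 0).
    + apply (lim_inv f (fun u => sqrt (F u))).
      * intros L HL. rewrite Hf by auto. f_equal. unfold F, Kexpr. fold S.
        field. split; lra.
      * apply continuous_sqrt_comp. apply (ex_derive_continuous (K := R_AbsRing) (V := R_NormedModule)). unfold F.
        auto_derive. split; lra.
    + unfold F. field. lra.
  - intros H2 HS Hp2. subst h2.
    set (S := h0^2+h1^2) in *.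
    set (F := fun u => ((p0^2+p1^2)*u + (p2 - h0*h1*u)^2)/S^2 - u*(p0*h0+p1*h1)^2/S^3).
    replace (Rabs p2 / S) with (sqrt (F 0)).
    + apply (lim_inv _ (fun u => sqrt (F u))).
      * intros L HL. rewrite Hf by auto. rewrite <- sqrt_div_alt by auto.
        f_equal. unfold F, Kexpr. fold S.
        field. split; lra.
      * apply continuous_sqrt_comp. apply (ex_derive_continuous (K := R_AbsRing) (V := R_NormedModule)). unfold F.
        auto_derive. split; lra.
    + replace (F 0) with ((p2/S)^2) by (unfold F; field; lra).
      rewrite <- Rsqr_pow2, sqrt_Rsqr_abs. unfold Rdiv. rewrite Rabs_mult, Rabs_inv.
      rewrite (Rabs_pos_eq S) by lra. reflexivity.
Qed.

Lemma Ep1 gamma t : (forall i, (i < 3)%nat -> C2 (gamma i)) ->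
  Derive (hcomp gamma 1) t = / sqrt 2 * (Derive (Derive (gamma 1%nat)) t * exp (gamma 2%nat t)
   + Derive (gamma 1%nat) t * Derive (gamma 2%nat) t * exp (gamma 2%nat t)
   - Derive (Derive (gamma 0%nat)) t * exp (- gamma 2%nat t)
   + Derive (gamma 0%nat) t * Derive (gamma 2%nat) t * exp (- gamma 2%nat t)).
Proof.
  intros HC.
  destruct (HC 0%nat ltac:(lia)) as [A0 [B0 _]].
  destruct (HC 1%nat ltac:(lia)) as [A1 [B1 _]].
  destruct (HC 2%nat ltac:(lia)) as [A2 [B2 _]].
  apply is_derive_unique. unfold hcomp, om, pt, vel.
  auto_derive.
  - repeat split; auto.
  - change (fun x : R => gamma 2%nat x) with (gamma 2%nat). change (fun x : R => Derive (gamma 0%nat) x) with (Derive (gamma 0%nat)). change (fun x : R => Derive (gamma 1%nat) x) with (Derive (gamma 1%nat)). ring.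
Qed.

Lemma Spos gamma t : (exists i, (i < 3)%nat /\ Derive (gamma i) t <> 0) ->
  om 2 (pt gamma t) (vel gamma t) = 0 ->
  0 < (Derive (gamma 2%nat) t)^2 + (/ sqrt 2 * (- exp (- gamma 2%nat t) * Derive (gamma 0%nat) t
        + exp (gamma 2%nat t) * Derive (gamma 1%nat) t))^2.
Proof.
  intros [i [Hi Hd]] Hw. unfold om, pt, vel in Hw.
  pose proof Hs0. pose proof (exp_pos (gamma 2%nat t)). pose proof (exp_pos (- gamma 2%nat t)).
  set (d1 := Derive (gamma 0%nat) t) in *. set (d2 := Derive (gamma 1%nat) t) in *.
  set (d3 := Derive (gamma 2%nat) t) in *.
  set (e := exp (gamma 2%nat t)) in *. set (em := exp (- gamma 2%nat t)) in *.
  assert (Hw' : em * d1 + e * d2 = 0).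
  { apply Rmult_eq_reg_l with (- / sqrt 2). lra.
    apply Ropp_neq_0_compat, Rinv_neq_0_compat; auto. }
  destruct (Rlt_or_le 0 (d3^2 + (/ sqrt 2 * (- em * d1 + e * d2))^2)) as [H'|H']; auto.
  exfalso.
  assert (E3 : d3 = 0) by nra.
  assert (EB : / sqrt 2 * (- em * d1 + e * d2) = 0) by nra.
  apply Rmult_integral in EB. destruct EB as [EB|EB].
  { apply (Rinv_neq_0_compat _ H) in EB; auto. }
  assert (E1 : d1 = 0) by nra. assert (E2 : d2 = 0) by nra.
  destruct i as [|[|[|i]]]; try lia; auto.
Qed.

Lemma sqh x : (/ sqrt 2 * x)^2 = / 2 * x^2.
Proof. pose proof Hs2; pose proof Hs0. field [H]. auto. Qed.
Lemma sqh2 x y : (/ sqrt 2 * x) * (/ sqrt 2 * y) = / 2 * x * y.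
Proof. pose proof Hs2; pose proof Hs0. field [H]. auto. Qed.

Theorem lemma5p3 (gamma : nat -> R -> R) (a b t : R) :
  a <= b ->
  (forall i, (i < 3)%nat -> C2 (gamma i)) ->
  (forall s, a <= s <= b ->
     exists i, (i < 3)%nat /\ Derive (gamma i) s <> 0) ->
  a <= t <= b ->
  let g1 := gamma 0%nat in let g2 := gamma 1%nat in let g3 := gamma 2%nat in
  let d1 := Derive g1 t in let d2 := Derive g2 t in let d3 := Derive g3 t in
  let dd1 := Derive (Derive g1) t in let dd2 := Derive (Derive g2) t in
  let dd3 := Derive (Derive g3) t in
  let e3 := exp (g3 t) in let em3 := exp (- g3 t) in
  let B := - em3 * d1 + e3 * d2 in
  let B' := dd2 * e3 + d2 * d3 * e3 - dd1 * em3 + d1 * d3 * em3 in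
  let S := / 2 * B ^ 2 + d3 ^ 2 in
  let w := fun s => om 2 (pt gamma s) (vel gamma s) in
  let dw := Derive w t in
  (w t <> 0 ->
     is_lim (fun L => kappa L gamma t) p_infty
       (sqrt (/ 2 * B ^ 2 + d3 ^ 2) / Rabs (w t))) /\
  (w t = 0 -> dw = 0 ->
     is_lim (fun L => kappa L gamma t) p_infty
       (sqrt ((dd3 ^ 2 + / 2 * B' ^ 2) / S ^ 2
              - (d3 * dd3 + / 2 * B * B') ^ 2 / S ^ 3))) /\
  (w t = 0 -> dw <> 0 ->
     is_lim (fun L => kappa L gamma t / sqrt L) p_infty
       (Rabs dw / (/ 2 * B ^ 2 + d3 ^ 2))).
Proof.
  intros Hab HC Hreg Ht.
  pose proof (Ep1 gamma t HC) as E1.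
  pose proof (Spos gamma t (Hreg t Ht)) as HS.
  cbv zeta.
  destruct (core (Derive (gamma 2%nat) t)
     (/ sqrt 2 * (- exp (- gamma 2%nat t) * Derive (gamma 0%nat) t
        + exp (gamma 2%nat t) * Derive (gamma 1%nat) t))
     (om 2 (pt gamma t) (vel gamma t))
     (Derive (Derive (gamma 2%nat)) t)
     (/ sqrt 2 * (Derive (Derive (gamma 1%nat)) t * exp (gamma 2%nat t)
   + Derive (gamma 1%nat) t * Derive (gamma 2%nat) t * exp (gamma 2%nat t)
   - Derive (Derive (gamma 0%nat)) t * exp (- gamma 2%nat t)
   + Derive (gamma 0%nat) t * Derive (gamma 2%nat) t * exp (- gamma 2%nat t)))
     (Derive (fun s => om 2 (pt gamma s) (vel gamma s)) t)
     (fun L => kappa L gamma t)) as [C1 [C2' C3]].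
  { intros L HL. rewrite kappa_form by auto. rewrite E1. reflexivity. }
  rewrite !sqh in *. rewrite sqh2 in C2'.
  split; [|split].
  - intros Hw. specialize (C1 Hw). rewrite Rplus_comm. exact C1.
  - intros Hw Hdw. specialize (C2' Hw (HS Hw) Hdw).
    rewrite (Rplus_comm (/ 2 * _ ^ 2) (_ ^ 2)). exact C2'.
  - intros Hw Hdw. specialize (C3 Hw (HS Hw) Hdw).
    rewrite (Rplus_comm (/ 2 * _ ^ 2) (_ ^ 2)). exact C3.
Qed.
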